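(* Let $0<T<\infty$, $a,b\in\mathbb{R}$, $(B_t)_{t\in[0,T]}$ the continuous version of $B_t=\langle\cdot,\mathbf{1}_{[0,t)}\rangle$ on the white noise space, $X_t:=a(1-\frac tT)+b\frac tT+B_t-\frac tT B_T$, and for $\varepsilon>0$ let $\mathcal{I}^{BB}_\varepsilon:=\int_0^T\int_0^t p_\varepsilon(X_t-X_s)\,ds\,dt$ with $p_\varepsilon(x)=(2\pi\varepsilon)^{-1/2}e^{-x^2/(2\varepsilon)}$; let $\mathcal{I}^{BB}\in L^2(\mu)$ be the $L^2(\mu)$-limit of $\mathcal{I}^{BB}_\varepsilon$ as $\varepsilon\downarrow0$ (which exists). Then for every $z\in\mathbb{C}$ with $\operatorname{Re}z\le 0$ and every $1\le p<\infty$, $\exp(z\mathcal{I}^{BB}_\varepsilon)$ converges to $\exp(z\mathcal{I}^{BB})$ in $L^p(\mu)$ as $\varepsilon\to0$.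
   Context: $\mu$ is the white noise measure on the space $\mathcal{S}'(\mathbb{R})$ of tempered distributions: $\int\exp(i\langle\omega,\xi\rangle)d\mu(\omega)=\exp(-\frac12\langle\xi,\xi\rangle)$ for Schwartz $\xi$, with $\langle\cdot,\cdot\rangle$ the dual pairing extending the $L^2(\mathbb{R})$ inner product; for $\xi\in L^2(\mathbb{R})$, $\langle\cdot,\xi\rangle$ is an $L^2(\mu)$-limit. $(B_t)$ is then a standard Brownian motion and $(X_t)$ a Brownian bridge from $a$ to $b$ on $[0,T]$. $L^p(\mu)$ denotes complex-valued $p$-integrable functions w.r.t. $\mu$. *)

(* Defs.v *)
From HB Require Import structures.
From mathcomp Require Import all_boot all_order all_algebra.
From mathcomp Require Import all_classical all_reals all_analysis.
Set Implicit Arguments. Unset Strict Implicit. Unset Printing Implicit Defensive.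
Import Order.TTheory GRing.Theory Num.Theory.
Import numFieldNormedType.Exports.
Local Open Scope classical_set_scope.
Local Open Scope ring_scope.

Definition heat_kernel {R : realType} (eps x : R) : R :=
  (Num.sqrt (2 * pi * eps))^-1 * expR (- (x ^+ 2) / (2 * eps)).

(** A standard Brownian motion on [0,Tm] with continuous paths, on a
    probability space (Om, P), characterised exactly as the coordinate
    process <., 1_[0,t)> of the white noise measure: for all finite families
    of times t_k in [0,Tm] and reals c_k,
      E[exp(i sum_k c_k B_{t_k})] = exp(-1/2 <xi,xi>),
    with xi = sum_k c_k 1_[0,t_k), so <xi,xi> = sum_{j,k} c_j c_k min(t_j,t_k).
    The complex characteristic function is written via its real and
    imaginary parts (cos / sin). *)
Definition brownian_motion {R : realType} {d : measure_display}
  {Om : measurableType d} (P : probability Om R) (Tm : R)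
  (B : R -> Om -> R) : Prop :=
  [/\ (forall t, t \in `[0, Tm] -> measurable_fun setT (B t)),
      (forall w, {within `[0, Tm], continuous (fun t => B t w)}),
      (forall (n : nat) (t c : 'I_n -> R), (forall k, t k \in `[0, Tm]) ->
        (\int[P]_w (cos (\sum_(k < n) c k * B (t k) w))%:E =
         (expR (- (\sum_(j < n) \sum_(k < n) c j * c k * Order.min (t j) (t k)) / 2))%:E)%E)
    & (forall (n : nat) (t c : 'I_n -> R), (forall k, t k \in `[0, Tm]) ->
        (\int[P]_w (sin (\sum_(k < n) c k * B (t k) w))%:E = 0)%E)].

Definition bridge {R : realType} {Om : Type} (Tm a b : R) (B : R -> Om -> R)
  (t : R) (w : Om) : R :=
  a * (1 - t / Tm) + b * (t / Tm) + B t w - (t / Tm) * B Tm w.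

Definition approx_slt {R : realType} {Om : Type} (Tm a b : R)
  (B : R -> Om -> R) (eps : R) (w : Om) : R :=
  Rintegral lebesgue_measure `[0, Tm]
    (fun t => Rintegral lebesgue_measure `[0, t]
       (fun s => heat_kernel eps (bridge Tm a b B t w - bridge Tm a b B s w))).

(** Complex exponential exp(z x) for z = u + i v and x real, through its real
    and imaginary parts, and the complex modulus |exp(z x) - exp(z y)|. *)
Definition cexp_re {R : realType} (u v x : R) : R := expR (u * x) * cos (v * x).
Definition cexp_im {R : realType} (u v x : R) : R := expR (u * x) * sin (v * x).
Definition cexp_dist {R : realType} (u v x y : R) : R :=
  Num.sqrt ((cexp_re u v x - cexp_re u v y) ^+ 2
            + (cexp_im u v x - cexp_im u v y) ^+ 2).

(* Main.v *)
Require Import Defs.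
From HB Require Import structures.
From mathcomp Require Import all_boot all_order all_algebra.
From mathcomp Require Import all_classical all_reals all_analysis.
Import Order.TTheory GRing.Theory Num.Theory.
Import numFieldNormedType.Exports.
Local Open Scope classical_set_scope.
Local Open Scope ring_scope.
From mathcomp Require Import ring lra.
Import measurable_realfun.
Section trig.
Context {R : realType}.
Lemma sin_le_ge0 (t : R) : 0 <= t -> `|sin t| <= t.
Proof.
move=> t0.
have [c _ h] := @MVT_segment R sin cos 0 t t0
  (fun x _ => is_derive_sin x) (continuous_subspaceT (@continuous_sin R)).
rewrite sin0 subr0 subr0 in h; rewrite h normrM (ger0_norm t0).
by rewrite ler_piMl// cos_max.
Qed.

Lemma sin_le (t : R) : `|sin t| <= `|t|.
Proof.
have [t0|t0] := leP 0 t; first by rewrite (ger0_norm t0) sin_le_ge0.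
rewrite -normrN -sinN (ltr0_norm t0); apply: sin_le_ge0; lra.
Qed.

Lemma one_cos (t : R) : 1 - cos t <= t ^+ 2 / 2.
Proof.
set s := t / 2.
have -> : cos t = cos (s *+ 2) by rewrite -mulr_natr /s divfK.
rewrite cos_mulr2n cos2sin2 mulr2n.
have h := sin_le s.
have h2 : sin s ^+ 2 <= s ^+ 2.
  by rewrite -real_normK ?num_real// -[X in _ <= X]real_normK ?num_real// lerXn2r// ?nnegrE.
have -> : t ^+ 2 / 2 = s ^+ 2 * 2 by rewrite /s; field.
lra.
Qed.
End trig.

Section pw.
Context {R : realType}.

Lemma expR_lip {a b : R} : a <= 0 -> b <= 0 -> `|expR a - expR b| <= `|a - b|.
Proof.
wlog ab : a b / a <= b.
  move=> H a0 b0; have [|ba] := leP a b; first by move=> ab; exact: H.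
  by rewrite distrC (distrC a); apply: (H b a) => //; exact: ltW.
move=> a0 b0.
have e : expR a = expR b * expR (a - b) by rewrite -expRD addrC subrK.
have h1 := expR_ge1Dx (a - b).
have h2 : expR b <= 1 by rewrite expR_le1.
have h3 : expR (a - b) <= 1 by rewrite expR_le1; lra.
have h4 := expR_ge0 b.
rewrite e (ler0_norm); last by rewrite subr_le0 ler_piMr.
rewrite (ler0_norm); last lra.
have : expR b * (1 - expR (a - b)) <= 1 - expR (a - b).
  by rewrite ler_piMl// subr_ge0.
lra.
Qed.

Lemma dist_sq (u v x y : R) : cexp_dist u v x y ^+ 2 =
  (expR (u * x) - expR (u * y)) ^+ 2
  + 2 * expR (u * x) * expR (u * y) * (1 - cos (v * x - v * y)).
Proof.
rewrite /cexp_dist sqr_sqrtr; last by rewrite addr_ge0// sqr_ge0.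
rewrite /cexp_re /cexp_im cosB.
have h1 := cos2Dsin2 (v * x); have h2 := cos2Dsin2 (v * y).
set A := expR (u * x); set B := expR (u * y).
set c1 := cos (v * x); set s1 := sin (v * x).
set c2 := cos (v * y); set s2 := sin (v * y).
apply/eqP; rewrite -subr_eq0; apply/eqP.
have -> : (A * c1 - B * c2) ^+ 2 + (A * s1 - B * s2) ^+ 2 -
  ((A - B) ^+ 2 + 2 * A * B * (1 - (c1 * c2 + s1 * s2))) =
  A ^+ 2 * (c1 ^+ 2 + s1 ^+ 2 - 1) + B ^+ 2 * (c2 ^+ 2 + s2 ^+ 2 - 1) by ring.
by rewrite h1 h2 !subrr !mulr0 addr0.
Qed.

Lemma dist_ge0 (u v x y : R) : 0 <= cexp_dist u v x y.
Proof. exact: sqrtr_ge0. Qed.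

Lemma dist_le_K (u v x y : R) : u <= 0 -> 0 <= x -> 0 <= y ->
  cexp_dist u v x y ^+ 2 <= (u ^+ 2 + v ^+ 2) * (x - y) ^+ 2.
Proof.
move=> u0 x0 y0; rewrite dist_sq.
have ux : u * x <= 0 by rewrite mulr_le0_ge0.
have uy : u * y <= 0 by rewrite mulr_le0_ge0.
have hA : expR (u * x) <= 1 by rewrite expR_le1.
have hB : expR (u * y) <= 1 by rewrite expR_le1.
have hA0 := expR_ge0 (u * x); have hB0 := expR_ge0 (u * y).
have hl := expR_lip ux uy.
have hl2 : (expR (u * x) - expR (u * y)) ^+ 2 <= (u * x - u * y) ^+ 2.
  by rewrite -real_normK ?num_real// -[X in _ <= X]real_normK ?num_real// lerXn2r// ?nnegrE.
have hc := one_cos (v * x - v * y).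
have hc0 : 0 <= 1 - cos (v * x - v * y) by rewrite subr_ge0 cos_le1.
have hAB : expR (u * x) * expR (u * y) <= 1 by rewrite mulr_ile1.
have hAB0 : 0 <= expR (u * x) * expR (u * y) by rewrite mulr_ge0.
have hm : expR (u * x) * expR (u * y) * (1 - cos (v * x - v * y))
   <= 1 - cos (v * x - v * y) by rewrite ler_piMl.
have -> : (u ^+ 2 + v ^+ 2) * (x - y) ^+ 2 = (u * x - u * y) ^+ 2 + (v * x - v * y) ^+ 2 by ring.
rewrite -!mulrA (mulrA (expR (u*x))).
lra.
Qed.

Lemma dist_le_sum (u v x y : R) :
  cexp_dist u v x y <= expR (u * x) + expR (u * y).
Proof.
have hA0 := expR_ge0 (u * x); have hB0 := expR_ge0 (u * y).
rewrite -(@ler_pXn2r _ 2)// ?nnegrE ?dist_ge0 ?addr_ge0// dist_sq.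
have hc0 : 1 - cos (v * x - v * y) <= 2 by have := cos_geN1 (v * x - v * y); lra.
have hAB0 : 0 <= expR (u * x) * expR (u * y) by rewrite mulr_ge0.
have h := ler_wpM2l hAB0 hc0.
have e1 : 2 * expR (u * x) * expR (u * y) * (1 - cos (v * x - v * y)) =
  expR (u * x) * expR (u * y) * (1 - cos (v * x - v * y)) * 2 by ring.
have e2 : (expR (u * x) + expR (u * y)) ^+ 2 =
  (expR (u * x) - expR (u * y)) ^+ 2 + expR (u * x) * expR (u * y) * 2 * 2 by ring.
rewrite e1 e2; lra.
Qed.

Lemma main_bound (u v p e x y : R) : u <= 0 -> 1 <= p -> 0 < e -> e <= 1 ->
  0 <= x -> 0 <= y ->
  cexp_dist u v x y `^ p <= e + 2 `^ p * (u ^+ 2 + v ^+ 2) / e ^+ 2 * (x - y) ^+ 2.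
Proof.
move=> u0 p1 e0 e1 x0 y0.
set D := cexp_dist u v x y.
have D0 : 0 <= D := dist_ge0 _ _ _ _.
have D2 : D <= 2.
  have := dist_le_sum u v x y.
  have : expR (u * x) <= 1 by rewrite expR_le1 mulr_le0_ge0.
  have : expR (u * y) <= 1 by rewrite expR_le1 mulr_le0_ge0.
  rewrite -/D; lra.
have K := @dist_le_K u v x y u0 x0 y0; rewrite -/D in K.
have p0 : 0 <= 2 `^ p by exact: powR_ge0.
have T0 : 0 <= 2 `^ p * (u ^+ 2 + v ^+ 2) / e ^+ 2 * (x - y) ^+ 2.
  by rewrite mulr_ge0 ?sqr_ge0// divr_ge0 ?sqr_ge0// mulr_ge0// addr_ge0 ?sqr_ge0.
have [De|eD] := leP D e.
  suff : D `^ p <= D by lra.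
  have [->|Dn0] := eqVneq D 0; first by rewrite powR0//; lra.
  apply: ge1r_powR => //; rewrite lt_neqAle eq_sym Dn0 D0 /=; lra.
have h1 : D `^ p <= 2 `^ p by apply: ge0_ler_powR; rewrite ?nnegrE //; lra.
have h2 : 1 <= D ^+ 2 / e ^+ 2.
  rewrite ler_pdivlMr ?exprn_gt0// mul1r.
  by rewrite lerXn2r ?nnegrE //; [exact: ltW|exact: ltW].
have h3 : 2 `^ p <= 2 `^ p * (D ^+ 2 / e ^+ 2) by rewrite ler_peMr.
have h4 : 2 `^ p * (D ^+ 2 / e ^+ 2) <= 2 `^ p * (u ^+ 2 + v ^+ 2) / e ^+ 2 * (x - y) ^+ 2.
  have -> : 2 `^ p * (D ^+ 2 / e ^+ 2) = (2 `^ p / e ^+ 2) * D ^+ 2 by ring.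
  have -> : 2 `^ p * (u ^+ 2 + v ^+ 2) / e ^+ 2 * (x - y) ^+ 2 =
    (2 `^ p / e ^+ 2) * ((u ^+ 2 + v ^+ 2) * (x - y) ^+ 2) by ring.
  by apply: ler_wpM2l => //; rewrite divr_ge0 ?sqr_ge0.
lra.
Qed.
End pw.

Section intl.
Local Open Scope ereal_scope.
Context d (T : measurableType d) (R : realType).
Variable mu : {measure set T -> \bar R}.
Import HBNNSimple.

Lemma le_int_nm (f g : T -> \bar R) : (forall x, 0 <= f x) ->
  (forall x, f x <= g x) -> \int[mu]_x f x <= \int[mu]_x g x.
Proof.
move=> f0 fg; have g0 x : 0 <= g x := le_trans (f0 x) (fg x).
rewrite !ge0_integralTE//.
apply: ge_ereal_sup => _ [h /= hf <-]; apply: ereal_sup_ubound => /=.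
by exists h => // x; exact: le_trans (hf x) (fg x).
Qed.

Lemma sint_int (h : {nnsfun T >-> R}) : sintegral mu h = \int[mu]_x (h x)%:E.
Proof. by rewrite integral_nnsfun// patch_setT. Qed.

Lemma int_scale (c : R) (f : T -> \bar R) : (0 <= c)%R -> (forall x, 0 <= f x) ->
  \int[mu]_x (c%:E * f x) <= c%:E * \int[mu]_x f x.
Proof.
move=> c0 f0; have [->|cn0] := eqVneq c 0%R.
  by rewrite mul0e; under eq_integral do rewrite mul0e; rewrite integral0.
have cp : (0 < c)%R by rewrite lt_neqAle eq_sym cn0.
rewrite ge0_integralTE; last by move=> x; rewrite mule_ge0.
apply: ge_ereal_sup => _ [h /= hf <-]; rewrite sint_int.
have mh : measurable_fun setT (fun x => (h x / c)%R).
  by apply: measurable_realfun.measurable_funM => //; exact: measurable_cst.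
have -> : \int[mu]_x (h x)%:E = \int[mu]_x (c%:E * (h x / c)%:E).
  by apply: eq_integral => x _; rewrite -EFinM mulrC divfK.
rewrite ge0_integralZl_EFin//; last first.
  - exact/measurable_EFinP.
  - by move=> x _; rewrite lee_fin divr_ge0.
apply: lee_wpmul2l; first by rewrite lee_fin.
apply: le_int_nm; first by move=> x; rewrite lee_fin divr_ge0.
move=> x; have := hf x.
have -> : (h x / c)%:E = c^-1%:E * (h x)%:E by rewrite -EFinM mulrC.
move=> H; rewrite -[f x]mul1e -(mulVf cn0) EFinM -muleA.
by apply: lee_wpmul2l => //; rewrite lee_fin invr_ge0.
Qed.

Lemma int_addl (f : T -> \bar R) (g : T -> R) : (forall x, 0 <= f x) ->
  (forall x, 0 <= g x)%R -> measurable_fun setT g ->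
  \int[mu]_x (f x + (g x)%:E) <= \int[mu]_x f x + \int[mu]_x (g x)%:E.
Proof.
move=> f0 g0 mg.
rewrite ge0_integralTE; last by move=> x; rewrite adde_ge0// lee_fin.
apply: ge_ereal_sup => _ [h /= hf <-]; rewrite sint_int.
have mhg : measurable_fun setT (fun x => h x - g x)%R.
  apply: measurable_realfun.measurable_funB => //.
have -> : \int[mu]_x (h x)%:E = \int[mu]_x ((((fun x => h x - g x)%R)^\+ x)%:E
    + (((fun x => h x) \min g) x)%:E).
  apply: eq_integral => x _; rewrite -EFinD; congr EFin.
  rewrite /funrpos /=; case: (leP (h x - g x)%R 0%R) => H1; case: (leP (h x) (g x)) => H2; rewrite ?H1 ?H2 /=; lra.
rewrite ge0_integralD//; last 4 first.
  - by move=> x _; rewrite lee_fin funrpos_ge0.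
  - by apply/measurable_EFinP; exact: measurable_funrpos.
  - by move=> x _; rewrite lee_fin /= le_min fun_ge0 g0.
  - by apply/measurable_EFinP; apply: measurable_minr.
apply: leeD.
  apply: le_int_nm; first by move=> x; rewrite lee_fin funrpos_ge0.
  move=> x; have := hf x; have := f0 x.
  case: (f x) => [r| |] //= r0; try by move=> _; rewrite leey.
  rewrite -EFinD !lee_fin => H; move: r0; rewrite lee_fin => r0.
  rewrite /funrpos /= ge_max; apply/andP; split => //; lra.
apply: (ge0_le_integral mu measurableT).
- by move=> x _; rewrite lee_fin /= le_min fun_ge0 g0.
- by apply/measurable_EFinP; apply: measurable_minr.
- by apply/measurable_EFinP.
- by move=> x _; rewrite lee_fin /= ge_min lexx orbT.
Qed.
End intl.


Lemma approx_ge0 (R : realType) (Om : Type) (Tm a b : R) (B : R -> Om -> R) eps w :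
  0 <= approx_slt Tm a b B eps w.
Proof.
rewrite /approx_slt /Rintegral; apply: fine_ge0; apply: integral_ge0 => t _.
rewrite lee_fin; apply: fine_ge0; apply: integral_ge0 => s _.
by rewrite lee_fin /heat_kernel mulr_ge0 ?invr_ge0 ?sqrtr_ge0 ?expR_ge0.
Qed.

Theorem corollary3p2 (R : realType) (d : measure_display) (Om : measurableType d)
  (P : probability Om R) (Tm a b : R) (B : R -> Om -> R) (I : Om -> R) :
  0 < Tm ->
  brownian_motion P Tm B ->
  measurable_fun setT I ->
  (* I is the L^2(P)-limit of I_eps as eps -> 0+ *)
  (\int[P]_w ((approx_slt Tm a b B eps w - I w) ^+ 2)%:E)%E @[eps --> 0^'+]
    --> 0%E ->
  forall (u v : R) (p : R), u <= 0 -> 1 <= p ->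
  (\int[P]_w ((cexp_dist u v (approx_slt Tm a b B eps w) (I w)) `^ p)%:E)%E
    @[eps --> 0^'+] --> 0%E.
Proof.
move=> _ _ mI hJ u v p u0 p1.
set X := approx_slt Tm a b B.
have X0 eps w : 0 <= X eps w by exact: approx_ge0.
set N := I @^-1` `]-oo, 0[.
have mN : measurable N by have := mI measurableT _ (@measurable_itv _ `]-oo, 0[); rewrite setTI.
have NE w : N w <-> I w < 0 by rewrite /N /preimage /= in_itv.
pose F w := (\1_N w * I w ^+ 2)%:E.
have F0 w : (0 <= F w)%E by rewrite lee_fin mulr_ge0 ?sqr_ge0// indicE.
have mF : measurable_fun setT F.
  apply/measurable_EFinP; apply: measurable_funM; first exact: measurable_indic.
  by under eq_fun do rewrite expr2; exact: measurable_funM.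
have PN : P N = 0%E.
  have FJ : (\int[P]_w F w <= 0)%E.
    apply: (cvge_ge _ hJ); near=> eps.
    apply: le_int_nm => // w; rewrite /F lee_fin indicE.
    have [Nw|Nw] := boolP (w \in N).
      have : I w < 0 by rewrite -NE; exact: set_mem.
      move=> Iw; have := X0 eps w; rewrite mul1r => Xw.
      rewrite -subr_ge0.
      have -> : (X eps w - I w) ^+ 2 - I w ^+ 2 = X eps w * (X eps w - 2 * I w) by ring.
      apply: mulr_ge0 => //; lra.
    by rewrite mul0r sqr_ge0.
  have F00 : (\int[P]_w F w = 0)%E by apply/le_anti; rewrite FJ integral_ge0.
  have : (\int[P]_(w in setT) `|F w| = 0)%E.
    by rewrite -F00; apply: eq_integral => w _; rewrite gee0_abs.
  move=> /(ae_eq_integral_abs _ measurableT mF) [M [mM PM sM]].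
  apply: (subset_measure0 mN mM) => // w Nw; apply: sM => /= H.
  have := H Logic.I; rewrite /F indicE mem_set// mul1r => -[] /eqP.
  rewrite sqrf_eq0 => /eqP I0; move: Nw; rewrite NE I0; lra.
pose G w := \1_N w * (1 + expR (u * I w)) `^ p.
have G0 w : 0 <= G w by rewrite mulr_ge0 ?powR_ge0// indicE.
have mG : measurable_fun setT G.
  apply: measurable_funM; first exact: measurable_indic.
  apply: (measurableT_comp (measurable_powR p)).
  apply: measurable_funD; first exact: measurable_cst.
  apply: (@measurableT_comp _ _ _ _ _ _ expR _ (fun w => u * I w)).
    exact: measurable_expR.
  by apply: measurable_funM => //; exact: measurable_cst.
have intG : (\int[P]_w (G w)%:E = 0)%E.
  rewrite (ae_eq_integral (cst 0%E)) ?integral0//.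
  - exact/measurable_EFinP.
  rewrite /ae_eq /prop_near1 /almost_everywhere /=.
  exists N; split => // w /= H; apply: contrapT => Nw; apply: H => _.
  by rewrite /G indicE memNset// mul0r.
have bound e eps : 0 < e -> e <= 1 ->
  (\int[P]_w ((cexp_dist u v (X eps w) (I w)) `^ p)%:E <=
   (2 `^ p * (u ^+ 2 + v ^+ 2) / e ^+ 2)%:E *
   \int[P]_w ((X eps w - I w) ^+ 2)%:E + e%:E)%E.
  move=> e0 e1; set C := 2 `^ p * (u ^+ 2 + v ^+ 2) / e ^+ 2.
  have C0 : 0 <= C.
    by rewrite divr_ge0 ?sqr_ge0// mulr_ge0 ?powR_ge0// addr_ge0 ?sqr_ge0.
  apply: (@le_trans _ _ (\int[P]_w (C%:E * ((X eps w - I w) ^+ 2)%:E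
      + (e + G w)%:E))%E).
    apply: le_int_nm => [w|w]; first by rewrite lee_fin powR_ge0.
    rewrite -EFinM -EFinD lee_fin.
    have [Iw|Iw] := leP 0 (I w).
      have := @main_bound _ u v p e (X eps w) (I w) u0 p1 e0 e1 (X0 eps w) Iw.
      have := G0 w; rewrite -/C; lra.
    have -> : G w = (1 + expR (u * I w)) `^ p.
      by rewrite /G indicE mem_set ?mul1r//; rewrite NE.
    have h1 : cexp_dist u v (X eps w) (I w) `^ p <= (1 + expR (u * I w)) `^ p.
      apply: ge0_ler_powR; rewrite ?nnegrE ?dist_ge0 ?addr_ge0 ?expR_ge0//; first lra.
      apply: (le_trans (dist_le_sum _ _ _ _)); rewrite lerD2r expR_le1.
      by rewrite mulr_le0_ge0.
    have : 0 <= C * (X eps w - I w) ^+ 2 by rewrite mulr_ge0 ?sqr_ge0.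
    lra.
  apply: (le_trans (@int_addl _ _ _ P (fun w => C%:E * ((X eps w - I w) ^+ 2)%:E)%E
     (fun w => e + G w) _ _ _)).
  - by move=> w; rewrite -EFinM lee_fin mulr_ge0 ?sqr_ge0.
  - by move=> w; rewrite addr_ge0//; lra.
  - by apply: measurable_funD => //; exact: measurable_cst.
  apply: leeD.
    by apply: int_scale => // w; rewrite lee_fin sqr_ge0.
  rewrite (eq_integral (fun w => e%:E + (G w)%:E)%E); last by move=> w _; rewrite EFinD.
  rewrite ge0_integralD//; first last.
  - exact/measurable_EFinP.
  - by move=> w _; rewrite lee_fin.
  - by move=> w _; rewrite lee_fin; lra.
  rewrite intG adde0 integral_cst//.
  rewrite -[leRHS]mule1; apply: lee_wpmul2l; first by rewrite lee_fin ltW.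
  exact: probability_le1.

set S := fun eps => (\int[P]_w ((cexp_dist u v (X eps w) (I w)) `^ p)%:E)%E.
have S0 eps : (0 <= S eps)%E.
  by apply: integral_ge0 => w _; rewrite lee_fin powR_ge0.
have [Jfin Jcvg] := (fine_cvgP _ _).1 hJ.
have K e' : 0 < e' -> \forall eps \near 0^'+, (S eps <= e'%:E)%E.
  move=> e'0.
  pose e := Num.min 1 (e' / 2).
  have e0 : 0 < e by rewrite lt_min ltr01 divr_gt0.
  have e1 : e <= 1 by rewrite ge_min lexx.
  have e2 : e <= e' / 2 by rewrite ge_min lexx orbT.
  pose C := 2 `^ p * (u ^+ 2 + v ^+ 2) / e ^+ 2.
  have C0 : 0 <= C.
    by rewrite divr_ge0 ?sqr_ge0// mulr_ge0 ?powR_ge0// addr_ge0 ?sqr_ge0.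
  have tol0 : 0 < e' / 2 / (C + 1) by rewrite divr_gt0 ?divr_gt0//; lra.
  move/cvgrPdist_le : Jcvg => /(_ _ tol0) Jn.
  apply: filterS2 Jfin Jn => eps Jf Jd.
  apply: le_trans (bound e eps e0 e1) _.
  rewrite -(fineK Jf) -EFinM -EFinD lee_fin.
  set j := fine _ in Jd *.
  have j0 : 0 <= j by apply: fine_ge0; apply: integral_ge0 => w _; rewrite lee_fin sqr_ge0.
  move: Jd; rewrite sub0r normrN ger0_norm// => Jd.
  have h1 : C * j <= C * (e' / 2 / (C + 1)) by rewrite ler_wpM2l.
  have h2 : C * (e' / 2 / (C + 1)) <= e' / 2.
    have -> : C * (e' / 2 / (C + 1)) = e' / 2 * (C / (C + 1)) by ring.
    rewrite ler_piMr ?divr_ge0//; try lra.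
    by rewrite ler_pdivrMr ?mul1r; lra.
  rewrite -/C; lra.
apply/fine_cvgP; split.
  apply: filterS (K 1 ltr01) => eps H.
  by rewrite ge0_fin_numE ?S0// (le_lt_trans H) ?ltry.
apply/cvgrPdist_le => e' e'0; apply: filterS (K e' e'0) => eps H.
have Sf : S eps \is a fin_num by rewrite ge0_fin_numE ?S0// (le_lt_trans H) ?ltry.
rewrite sub0r normrN ger0_norm ?fine_ge0 ?S0//.
by rewrite -lee_fin fineK.
Unshelve. all: end_near. Qed.
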